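(* The Galois structure $\Gamma_C=(\mathsf{PreOrdGrp},\mathsf{PreOrdAb},C,V,\mathscr{E}_C,\mathscr{Z}_C)$ is admissible; that is, for every preordered group $B$, every preordered abelian group $X$ and every regular epimorphism $\phi\colon X\to C(B)$ in $\mathsf{PreOrdAb}$, the functor $C$ sends the pullback in $\mathsf{PreOrdGrp}$ of $V(\phi)$ along the unit $\eta_B\colon B\to VC(B)$ to a pullback in $\mathsf{PreOrdAb}$.
   Context: A preordered group is a pair $(G,P_G)$ where $G$ is a group (additively written) and $P_G\subseteq G$ a submonoid closed under conjugation; morphisms are group homomorphisms $f$ with $f(P_G)\subseteq P_H$. This is $\mathsf{PreOrdGrp}$; $\mathsf{PreOrdAb}$ is the full subcategory with $G$ abelian, $V$ the inclusion. $C$ is the left adjoint of $V$: $C(G,P_G)=(G/[G,G],\eta_G(P_G))$ with $\eta_G$ the abelianization quotient, unit $(\eta_G,\eta_G|_{P_G})$; the counit is an isomorphism. Limits in $\mathsf{PreOrdGrp}$ are computed componentwise. $\mathscr{E}_C$ (resp. $\mathscr{Z}_C$) is the class of regular epimorphisms of $\mathsf{PreOrdGrp}$ (resp. $\mathsf{PreOrdAb}$), namely morphisms $(f,\bar f)$ with both $f$ and $\bar f$ surjective. In general, a Galois structure $(\mathscr C,\mathscr F,F,U,\mathscr E,\mathscr Z)$ (adjunction $F\dashv U$ with classes of morphisms $\mathscr E$, $\mathscr Z$ stable under pullback and composition, containing isomorphisms, with $F(\mathscr E)\subseteq\mathscr Z$, $U(\mathscr Z)\subseteq\mathscr E$) is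 admissible when, for each $B$, the counit of the induced adjunction between extensions of $B$ in $\mathscr E$ and extensions of $F(B)$ in $\mathscr Z$ (left adjoint $F$, right adjoint pulling back $U(\phi)$ along the unit $\eta_B$) is an isomorphism; when the counit of $F\dashv U$ is an isomorphism, this is equivalent to the pullback-preservation condition stated in the claim. *)

(* Defs.v *)
From Stdlib Require Import ClassicalEpsilon FunctionalExtensionality
  PropExtensionality ProofIrrelevance.

Set Implicit Arguments.

(* Raw data of a preordered group (additively written, not necessarily      *)
(* abelian): carrier, +, 0, -, and the positive cone P.                     *)
Record PGrp := MkPGrp {
  car :> Type;
  gadd : car -> car -> car;
  gzero : car;
  gopp : car -> car;
  gpos : car -> Prop }.

Arguments gadd {p} _ _.
Arguments gzero {p}.
Arguments gopp {p} _.
Arguments gpos {p} _.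

Definition is_group (G : PGrp) : Prop :=
  (forall a b c : G, gadd a (gadd b c) = gadd (gadd a b) c) /\
  (forall a : G, gadd gzero a = a) /\
  (forall a : G, gadd a gzero = a) /\
  (forall a : G, gadd (gopp a) a = gzero) /\
  (forall a : G, gadd a (gopp a) = gzero).

Definition is_preordgrp (G : PGrp) : Prop :=
  is_group G /\
  gpos (@gzero G) /\
  (forall a b : G, gpos a -> gpos b -> gpos (gadd a b)) /\
  (forall g a : G, gpos a -> gpos (gadd (gadd g a) (gopp g))).

Definition is_abelian (G : PGrp) : Prop := forall a b : G, gadd a b = gadd b a.

Record PreOrdGrp := MkPreOrdGrp { pg :> PGrp; pg_ax : is_preordgrp pg }.

Definition is_hom (G H : PGrp) (f : G -> H) : Prop :=
  (forall a b : G, f (gadd a b) = gadd (f a) (f b)) /\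
  f gzero = gzero /\
  (forall a : G, f (gopp a) = gopp (f a)) /\
  (forall a : G, gpos a -> gpos (f a)).

Inductive Comm (G : PGrp) : car G -> Prop :=
| Comm_gen : forall a b : G, Comm G (gadd (gadd (gadd a b) (gopp a)) (gopp b))
| Comm_zero : Comm G gzero
| Comm_add : forall x y : G, Comm G x -> Comm G y -> Comm G (gadd x y)
| Comm_opp : forall x : G, Comm G x -> Comm G (gopp x)
| Comm_conj : forall g x : G, Comm G x -> Comm G (gadd (gadd g x) (gopp g)).
Arguments Comm {G} _.

Definition cls (G : PGrp) (g : G) : G -> Prop := fun h => Comm (gadd h (gopp g)).
Arguments cls {G} _ _.

Definition Cab_car (G : PGrp) : Type := {S : G -> Prop | exists g : G, S = cls g}.

Definition eta (G : PGrp) (g : G) : Cab_car G :=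
  exist (fun S => exists g0 : G, S = cls g0) (cls g) (ex_intro _ g eq_refl).
Arguments eta {G} _.

Definition rep (G : PGrp) (S : Cab_car G) : G :=
  proj1_sig (constructive_indefinite_description _ (proj2_sig S)).
Arguments rep {G} _.

Definition Cab (G : PGrp) : PGrp :=
  @MkPGrp (Cab_car G)
    (fun S T => eta (gadd (rep S) (rep T)))
    (eta gzero)
    (fun S => eta (gopp (rep S)))
    (fun S => exists g : G, gpos g /\ eta g = S).

Definition Cmap (G H : PGrp) (f : G -> H) : Cab G -> Cab H :=
  fun S => eta (f (rep S)).

Section GroupFacts.
Variable G : PGrp.
Hypothesis hG : is_group G.

Let assoc : forall a b c : G, gadd a (gadd b c) = gadd (gadd a b) c.
Proof. apply hG. Qed.
Let idl : forall a : G, gadd gzero a = a.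
Proof. apply hG. Qed.
Let idr : forall a : G, gadd a gzero = a.
Proof. apply hG. Qed.
Let invl : forall a : G, gadd (gopp a) a = gzero.
Proof. apply hG. Qed.
Let invr : forall a : G, gadd a (gopp a) = gzero.
Proof. apply hG. Qed.

Lemma grp_opp_opp (a : G) : gopp (gopp a) = a.
Proof.
  rewrite <- (idr (gopp (gopp a))), <- (invl a), assoc, invl, idl. reflexivity.
Qed.

Lemma grp_opp_add (a b : G) : gopp (gadd a b) = gadd (gopp b) (gopp a).
Proof.
  assert (H : gadd (gadd a b) (gadd (gopp b) (gopp a)) = gzero).
  { rewrite <- assoc, (assoc b), invr, idl, invr. reflexivity. }
  rewrite <- (idr (gopp (gadd a b))), <- H, assoc, invl, idl. reflexivity.
Qed.

Lemma cls_eq (a b : G) : Comm (gadd a (gopp b)) -> cls a = cls b.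
Proof.
  intro Hab. unfold cls. apply functional_extensionality. intro h.
  apply propositional_extensionality. split; intro H.
  - replace (gadd h (gopp b)) with (gadd (gadd h (gopp a)) (gadd a (gopp b))).
    + now apply Comm_add.
    + rewrite <- assoc, (assoc (gopp a)), invl, idl. reflexivity.
  - replace (gadd h (gopp a)) with (gadd (gadd h (gopp b)) (gopp (gadd a (gopp b)))).
    + apply Comm_add; [assumption | now apply Comm_opp].
    + rewrite grp_opp_add, grp_opp_opp, <- assoc, (assoc (gopp b)), invl, idl.
      reflexivity.
Qed.

Lemma cls_inv (a b : G) : cls a = cls b -> Comm (gadd a (gopp b)).
Proof.
  intro H. change (cls b a). rewrite <- H. unfold cls. rewrite invr.
  apply Comm_zero.
Qed.

Lemma eta_eq (a b : G) : Comm (gadd a (gopp b)) -> eta a = eta b.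
Proof.
  intro H. unfold eta. generalize (ex_intro (fun g0 : G => cls a = cls g0) a eq_refl).
  generalize (ex_intro (fun g0 : G => cls b = cls g0) b eq_refl).
  rewrite (@cls_eq a b H). intros e1 e2. f_equal. apply proof_irrelevance.
Qed.

Lemma rep_eta (a : G) : Comm (gadd a (gopp (rep (eta a)))).
Proof.
  unfold rep. destruct (constructive_indefinite_description _ _) as [r Hr].
  simpl in *. now apply cls_inv.
Qed.

Lemma eta_add (a b : G) :
  eta (gadd a b) = @gadd (Cab G) (eta a) (eta b).
Proof.
  simpl. apply eta_eq.
  set (a' := rep (eta a)). set (b' := rep (eta b)).
  pose proof (rep_eta a) as Ha. pose proof (rep_eta b) as Hb.
  fold a' in Ha. fold b' in Hb.
  replace (gadd (gadd a b) (gopp (gadd a' b')))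
    with (gadd (gadd (gadd a (gadd b (gopp b'))) (gopp a)) (gadd a (gopp a'))).
  - apply Comm_add; [apply Comm_conj|]; assumption.
  - rewrite grp_opp_add.
    rewrite <- (assoc (gadd a (gadd b (gopp b')))), (assoc (gopp a)), invl, idl.
    rewrite <- !assoc. reflexivity.
Qed.

Lemma eta_opp (a : G) : eta (gopp a) = @gopp (Cab G) (eta a).
Proof.
  simpl. apply eta_eq. set (a' := rep (eta a)).
  pose proof (rep_eta a) as Ha. fold a' in Ha.
  replace (gadd (gopp a) (gopp (gopp a')))
    with (gadd (gadd (gopp a) (gopp (gadd a (gopp a')))) (gopp (gopp a))).
  - apply Comm_conj, Comm_opp, Ha.
  - rewrite grp_opp_add, !grp_opp_opp, <- !assoc, invl, idr. reflexivity.
Qed.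

End GroupFacts.

Section Pullback.
Variables (B : PreOrdGrp) (X : PGrp) (phi : X -> Cab B).
Hypothesis hphi : is_hom X (Cab B) phi.

Definition pb_car : Type := {p : B * X | eta (fst p) = phi (snd p)}.

Let hB : is_group B := proj1 (pg_ax B).

Definition pb_add (p q : pb_car) : pb_car.
Proof.
  refine (exist _ (gadd (fst (proj1_sig p)) (fst (proj1_sig q)),
                   gadd (snd (proj1_sig p)) (snd (proj1_sig q))) _).
  destruct p as [[b x] Hp], q as [[b' x'] Hq]; simpl in *.
  rewrite (eta_add hB), (proj1 hphi), Hp, Hq. reflexivity.
Defined.

Definition pb_zero : pb_car.
Proof.
  refine (exist _ (gzero, gzero) _). simpl.
  rewrite (proj1 (proj2 hphi)). reflexivity.
Defined.

Definition pb_opp (p : pb_car) : pb_car.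
Proof.
  refine (exist _ (gopp (fst (proj1_sig p)), gopp (snd (proj1_sig p))) _).
  destruct p as [[b x] Hp]; simpl in *.
  rewrite (eta_opp hB), (proj1 (proj2 (proj2 hphi))), Hp. reflexivity.
Defined.

Definition pullback : PGrp :=
  @MkPGrp pb_car pb_add pb_zero pb_opp
    (fun p => gpos (fst (proj1_sig p)) /\ gpos (snd (proj1_sig p))).

Definition pb_fst : pullback -> B := fun p => fst (proj1_sig p).
Definition pb_snd : pullback -> X := fun p => snd (proj1_sig p).

End Pullback.

Definition is_pullback_ab (Pv A1 A2 D : PGrp)
  (p1 : Pv -> A1) (p2 : Pv -> A2) (f1 : A1 -> D) (f2 : A2 -> D) : Prop :=
  is_hom Pv A1 p1 /\ is_hom Pv A2 p2 /\ is_hom A1 D f1 /\ is_hom A2 D f2 /\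
  (forall s : Pv, f1 (p1 s) = f2 (p2 s)) /\
  forall (Z : PreOrdGrp), is_abelian Z ->
  forall (u : Z -> A1) (v : Z -> A2),
    is_hom Z A1 u -> is_hom Z A2 v -> (forall z : Z, f1 (u z) = f2 (v z)) ->
    exists! w : Z -> Pv,
      is_hom Z Pv w /\ (forall z, p1 (w z) = u z) /\ (forall z, p2 (w z) = v z).

Arguments Cmap {G H} f _.
Arguments pullback : clear implicits.
Arguments pb_fst : clear implicits.
Arguments pb_snd : clear implicits.
Arguments is_hom : clear implicits.

(* the unit eta_B : B -> VC(B) of the adjunction C -| V, as a map into Cab B *)
Definition unit_eta (G : PGrp) : G -> Cab G := fun g => eta g.

(* Main.v *)
Require Import Defs.
From Stdlib Require Import ClassicalEpsilon FunctionalExtensionality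
  PropExtensionality ProofIrrelevance.

Set Implicit Arguments.

Lemma eta_rep (G : PGrp) (S : Cab_car G) : eta (rep S) = S.
Proof.
  destruct S as [S HS]. unfold rep; simpl.
  destruct (constructive_indefinite_description _ HS) as [r Hr]; simpl.
  unfold eta. subst S. f_equal. apply proof_irrelevance.
Qed.

Lemma eta_surj (G : PGrp) (S : Cab_car G) : exists a : G, S = eta a.
Proof. exists (rep S). symmetry. apply eta_rep. Qed.

Lemma Cab_zero (G : PGrp) : @gzero (Cab G) = eta (@gzero G).
Proof. reflexivity. Qed.

Section Gen.
Variable G : PGrp.
Hypothesis hG : is_group G.

Lemma g_assoc (a b c : G) : gadd a (gadd b c) = gadd (gadd a b) c. Proof. apply hG. Qed.
Lemma g_idl (a : G) : gadd gzero a = a. Proof. apply hG. Qed.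
Lemma g_idr (a : G) : gadd a gzero = a. Proof. apply hG. Qed.
Lemma g_invl (a : G) : gadd (gopp a) a = gzero. Proof. apply hG. Qed.
Lemma g_invr (a : G) : gadd a (gopp a) = gzero. Proof. apply hG. Qed.

Lemma g_opp0 : gopp (@gzero G) = gzero.
Proof. rewrite <- (g_idr (gopp gzero)). apply g_invl. Qed.

Lemma g_sub_eq (a b : G) : gadd a (gopp b) = gzero -> a = b.
Proof. intro H. rewrite <- (g_idr a), <- (g_invl b), g_assoc, H, g_idl. reflexivity. Qed.

Lemma eta_cls (a b : G) : eta a = eta b -> Comm (gadd a (gopp b)).
Proof. intro H. apply (cls_inv hG). exact (f_equal (@proj1_sig _ _) H). Qed.

Lemma comm_ab (hab : is_abelian G) (a : G) : Comm a -> a = gzero.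
Proof.
  induction 1.
  - rewrite (hab a b), <- (g_assoc b a (gopp a)), g_invr, g_idr, g_invr. reflexivity.
  - reflexivity.
  - rewrite IHComm1, IHComm2, g_idl. reflexivity.
  - rewrite IHComm, g_opp0. reflexivity.
  - rewrite IHComm, g_idr, g_invr. reflexivity.
Qed.

Lemma eta_inj_ab (hab : is_abelian G) (a b : G) : eta a = eta b -> a = b.
Proof. intro H. apply g_sub_eq. apply comm_ab; auto. apply eta_cls; auto. Qed.

Lemma Cab_group : is_group (Cab G).
Proof.
  split; [|split; [|split; [|split]]].
  - intros S T U. destruct (eta_surj S) as [a ->], (eta_surj T) as [b ->],
      (eta_surj U) as [c ->].
    rewrite <- !(eta_add hG). rewrite g_assoc. reflexivity.
  - intros S. destruct (eta_surj S) as [a ->]. rewrite Cab_zero, <- (eta_add hG), g_idl.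
    reflexivity.
  - intros S. destruct (eta_surj S) as [a ->]. rewrite Cab_zero, <- (eta_add hG), g_idr.
    reflexivity.
  - intros S. destruct (eta_surj S) as [a ->].
    rewrite <- (eta_opp hG), <- (eta_add hG), g_invl. reflexivity.
  - intros S. destruct (eta_surj S) as [a ->].
    rewrite <- (eta_opp hG), <- (eta_add hG), g_invr. reflexivity.
Qed.

Lemma Cab_abelian : is_abelian (Cab G).
Proof.
  intros S T. destruct (eta_surj S) as [a ->], (eta_surj T) as [b ->].
  rewrite <- !(eta_add hG). apply (eta_eq hG).
  rewrite (grp_opp_add hG), g_assoc. apply Comm_gen.
Qed.

End Gen.

Section Homs.
Variables G H : PGrp.
Hypothesis hG : is_group G.
Hypothesis hH : is_group H.
Variable f : G -> H.
Hypothesis hf : is_hom G H f.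

Lemma hom_comm (a : G) : Comm a -> Comm (f a).
Proof.
  destruct hf as (fadd & f0 & fopp & fpos).
  induction 1.
  - rewrite !fadd, !fopp. apply Comm_gen.
  - rewrite f0. constructor.
  - rewrite fadd. constructor; auto.
  - rewrite fopp. constructor; auto.
  - rewrite !fadd, fopp. apply Comm_conj; auto.
Qed.

Lemma Cmap_eta (a : G) : Cmap f (eta a) = eta (f a).
Proof.
  destruct hf as (fadd & f0 & fopp & fpos).
  unfold Cmap. apply (eta_eq hH). pose proof (rep_eta hG a) as R.
  apply Comm_opp in R. rewrite (grp_opp_add hG), (grp_opp_opp hG) in R.
  apply hom_comm in R. rewrite fadd, fopp in R. exact R.
Qed.

Lemma Cmap_hom : is_hom (Cab G) (Cab H) (Cmap f).
Proof.
  pose proof hf as (fadd & f0 & fopp & fpos).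
  split; [|split; [|split]].
  - intros S T. destruct (eta_surj S) as [a ->], (eta_surj T) as [b ->].
    rewrite <- (eta_add hG), !Cmap_eta, fadd, (eta_add hH). reflexivity.
  - rewrite Cab_zero, Cmap_eta, f0. reflexivity.
  - intros S. destruct (eta_surj S) as [a ->].
    rewrite <- (eta_opp hG), !Cmap_eta, fopp, (eta_opp hH). reflexivity.
  - intros S [g [Hg <-]]. rewrite Cmap_eta. exists (f g). split; auto.
Qed.

End Homs.

Section Main.
Variables B X : PreOrdGrp.
Hypothesis hXab : is_abelian X.
Variable phi : X -> Cab B.
Hypothesis hphi : is_hom X (Cab B) phi.
Hypothesis hsurj : forall c : Cab B, exists x : X, phi x = c.

Let hB : is_group B := proj1 (pg_ax B).
Let hX : is_group X := proj1 (pg_ax X).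
Local Notation P := (pullback B X phi hphi).
Local Notation fstP := (pb_fst B X phi hphi).
Local Notation sndP := (pb_snd B X phi hphi).

Lemma pb_ext (p q : P) : proj1_sig p = proj1_sig q -> p = q.
Proof.
  destruct p as [p Hp], q as [q Hq]; simpl. intros ->. f_equal.
  apply proof_irrelevance.
Qed.

Lemma P_group : is_group P.
Proof.
  split; [|split; [|split; [|split]]].
  - intros [[a x] Ha] [[b y] Hb] [[c z] Hc]. apply pb_ext; simpl.
    rewrite (g_assoc hB), (g_assoc hX). reflexivity.
  - intros [[a x] Ha]. apply pb_ext; simpl. rewrite (g_idl hB), (g_idl hX). reflexivity.
  - intros [[a x] Ha]. apply pb_ext; simpl. rewrite (g_idr hB), (g_idr hX). reflexivity.
  - intros [[a x] Ha]. apply pb_ext; simpl. rewrite (g_invl hB), (g_invl hX). reflexivity.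
  - intros [[a x] Ha]. apply pb_ext; simpl. rewrite (g_invr hB), (g_invr hX). reflexivity.
Qed.

Lemma fst_hom : is_hom P B fstP.
Proof.
  split; [intros; reflexivity | split; [reflexivity | split; [intros; reflexivity|]]].
  intros p Hp. exact (proj1 Hp).
Qed.

Lemma snd_hom : is_hom P X sndP.
Proof.
  split; [intros; reflexivity | split; [reflexivity | split; [intros; reflexivity|]]].
  intros p Hp. exact (proj2 Hp).
Qed.

Lemma unit_hom : is_hom B (Cab B) (unit_eta B).
Proof.
  split; [|split; [|split]].
  - intros; apply (eta_add hB).
  - reflexivity.
  - intros; apply (eta_opp hB).
  - intros g Hg. exists g. split; auto.
Qed.

Lemma phi_pos (x : X) : gpos x -> exists g : B, gpos g /\ eta g = phi x.
Proof. intro Hx. exact (proj2 (proj2 (proj2 hphi)) x Hx). Qed.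

Lemma lift (a : B) : exists p : P, fstP p = a.
Proof.
  destruct (hsurj (eta a)) as [x Hx].
  exists (exist (fun p : B * X => eta (fst p) = phi (snd p)) (a, x) (eq_sym Hx)).
  reflexivity.
Qed.

Lemma zero_lift (a : B) : Comm a -> exists p : P, fstP p = a /\ sndP p = gzero.
Proof.
  intro Ha.
  assert (E : eta (fst (a, @gzero X)) = phi (snd (a, @gzero X))).
  { simpl. rewrite (proj1 (proj2 hphi)), Cab_zero. apply (eta_eq hB).
    rewrite (g_opp0 hB), (g_idr hB). exact Ha. }
  exists (exist (fun p : B * X => eta (fst p) = phi (snd p)) (a, gzero) E).
  split; reflexivity.
Qed.

Lemma comm_lift (b : B) : Comm b ->
  forall p : P, fstP p = b -> sndP p = gzero -> Comm p.
Proof.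
  induction 1; intros p Hf Hs.
  - destruct (lift a) as [p1 E1], (lift b) as [p2 E2].
    replace p with (@gadd P (@gadd P (@gadd P p1 p2) (@gopp P p1)) (@gopp P p2)).
    + apply Comm_gen.
    + apply pb_ext. destruct p as [[b0 x0] H0], p1 as [[b1 x1] H1], p2 as [[b2 x2] H2].
      unfold pb_fst, pb_snd in *; simpl in *. subst. f_equal.
      apply (comm_ab hX hXab). apply Comm_gen.
  - replace p with (@gzero P). + apply Comm_zero.
    + apply pb_ext. destruct p as [[b0 x0] H0].
      unfold pb_fst, pb_snd in *; simpl in *. subst. reflexivity.
  - destruct (zero_lift H) as [px [Fx Sx]], (zero_lift H0) as [py [Fy Sy]].
    replace p with (@gadd P px py).
    + apply Comm_add; auto.
    + apply pb_ext. destruct p as [[b0 x0] H2], px as [[b1 x1] H1], py as [[b2 x2] H3].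
      unfold pb_fst, pb_snd in *; simpl in *. subst. rewrite (g_idl hX). reflexivity.
  - destruct (zero_lift H) as [px [Fx Sx]].
    replace p with (@gopp P px).
    + apply Comm_opp; auto.
    + apply pb_ext. destruct p as [[b0 x0] H2], px as [[b1 x1] H1].
      unfold pb_fst, pb_snd in *; simpl in *. subst. rewrite (g_opp0 hX). reflexivity.
  - destruct (zero_lift H) as [px [Fx Sx]], (lift g) as [pg Eg].
    replace p with (@gadd P (@gadd P pg px) (@gopp P pg)).
    + apply Comm_conj; auto.
    + apply pb_ext. destruct p as [[b0 x0] H2], px as [[b1 x1] H1], pg as [[b2 x2] H3].
      unfold pb_fst, pb_snd in *; simpl in *. subst.
      rewrite (g_idr hX), (g_invr hX). reflexivity.
Qed.

Lemma snd_inj (s t : Cab P) : Cmap sndP s = Cmap sndP t -> s = t.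
Proof.
  intro E. destruct (eta_surj s) as [p ->], (eta_surj t) as [q ->].
  rewrite !(Cmap_eta P_group hX snd_hom) in E. apply (eta_inj_ab hX hXab) in E.
  apply (eta_eq P_group).
  apply comm_lift with (b := gadd (fstP p) (gopp (fstP q))).
  - apply (eta_cls hB). destruct p as [[b x] Hp], q as [[b' x'] Hq].
    unfold pb_snd, pb_fst in *; simpl in *. rewrite Hp, Hq, E. reflexivity.
  - reflexivity.
  - change (gadd (sndP p) (gopp (sndP q)) = gzero). rewrite E. apply (g_invr hX).
Qed.

End Main.

Theorem corollary2p6 (B : PreOrdGrp) (X : PreOrdGrp) (hXab : is_abelian X)
  (phi : X -> Cab B) (hphi : is_hom X (Cab B) phi)
  (hsurj : forall c : Cab B, exists x : X, phi x = c)
  (hsurjP : forall c : Cab B, gpos c -> exists x : X, gpos x /\ phi x = c) :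
  is_pullback_ab (Cab (pullback B X phi hphi)) (Cab B) (Cab X) (Cab (Cab B))
    (Cmap (pb_fst B X phi hphi)) (Cmap (pb_snd B X phi hphi))
    (Cmap (unit_eta B)) (Cmap phi).
Proof.
  pose proof (proj1 (pg_ax B)) as hB. pose proof (proj1 (pg_ax X)) as hX.
  pose proof (@P_group B X phi hphi) as hP.
  pose proof (@fst_hom B X phi hphi) as hfst.
  pose proof (@snd_hom B X phi hphi) as hsnd.
  pose proof (unit_hom B) as hunit.
  pose proof (Cab_group hB) as hCB.
  pose proof (@snd_inj B X hXab phi hphi hsurj) as sinj.
  pose proof (Cmap_hom hP hB hfst) as Hm1.
  pose proof (Cmap_hom hP hX hsnd) as Hm2.
  unfold is_pullback_ab.
  split; [exact Hm1|]. split; [exact Hm2|].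
  split; [exact (Cmap_hom hB hCB hunit)|]. split; [exact (Cmap_hom hX hCB hphi)|].
  split.
  { intro s. destruct (eta_surj s) as [p ->].
    rewrite (Cmap_eta hP hB hfst), (Cmap_eta hP hX hsnd), (Cmap_eta hB hCB hunit),
      (Cmap_eta hX hCB hphi).
    destruct p as [[b x] Hp]. unfold unit_eta, pb_fst, pb_snd; simpl in *.
    rewrite Hp. reflexivity. }
  intros Z hZab u v hu hv huv.
  assert (Hz : forall z, eta (rep (u z)) = phi (rep (v z))).
  { intro z. specialize (huv z).
    rewrite <- (eta_rep (u z)), <- (eta_rep (v z)) in huv.
    rewrite (Cmap_eta hB hCB hunit), (Cmap_eta hX hCB hphi) in huv.
    apply (eta_inj_ab hCB (Cab_abelian hB)) in huv. exact huv. }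
  set (w := fun z => @eta (pullback B X phi hphi)
     (exist (fun p : B * X => eta (fst p) = phi (snd p)) (rep (u z), rep (v z)) (Hz z))).
  assert (Ws : forall z, Cmap (pb_snd B X phi hphi) (w z) = v z).
  { intro z. unfold w. rewrite (Cmap_eta hP hX hsnd). apply eta_rep. }
  assert (Wf : forall z, Cmap (pb_fst B X phi hphi) (w z) = u z).
  { intro z. unfold w. rewrite (Cmap_eta hP hB hfst). apply eta_rep. }
  exists w. split.
  - split; [split; [|split; [|split]]|split; [exact Wf|exact Ws]].
    + intros a b. apply sinj. rewrite (proj1 Hm2), !Ws, (proj1 hv). reflexivity.
    + apply sinj. rewrite (proj1 (proj2 Hm2)), !Ws, (proj1 (proj2 hv)). reflexivity.
    + intros a. apply sinj.
      rewrite (proj1 (proj2 (proj2 Hm2))), !Ws, (proj1 (proj2 (proj2 hv))). reflexivity.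
    + intros z Hz'. destruct (proj2 (proj2 (proj2 hv)) z Hz') as [x [Hx Ex]].
      destruct (@phi_pos B X phi hphi x Hx) as [g [Hg Eg]].
      exists (exist (fun p : B * X => eta (fst p) = phi (snd p)) (g, x) Eg).
      split; [split; simpl; auto|].
      apply sinj. rewrite (Cmap_eta hP hX hsnd), Ws. exact Ex.
  - intros w' [_ [_ H2]]. apply functional_extensionality. intro z.
    apply sinj. rewrite H2, Ws. reflexivity.
Qed.
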